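(* Let $Y$ be a discrete random variable taking values in a set $\mathcal{Y}$, and let $B=(B_0,\dots,B_{m-1})$ be a random vector taking values in $\{0,1\}^m$. Assume $\mathbf{H}(Y\mid B)=0$ and that the components of $B$ are independent conditionally on $Y$. For $y_n\in\mathcal{Y}$ with $P(Y=y_n)>0$ define $\varphi^{(n)}\in\{-1,0,1\}^m$ by $\varphi^{(n)}_i=0$ if $P(B_i=1\mid Y=y_n)\in(0,1)$, $\varphi^{(n)}_i=-1$ if $P(B_i=1\mid Y=y_n)=0$, and $\varphi^{(n)}_i=1$ if $P(B_i=1\mid Y=y_n)=1$. Then for any $y_n,y_l\in\mathcal{Y}$ with $P(Y=y_n)>0$, $P(Y=y_l)>0$ and $y_l\neq y_n$, there exists an index $i$ with $\varphi^{(n)}_i=-\varphi^{(l)}_i\neq 0$.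
   Context: $\mathbf{H}(Y\mid B)$ is the conditional Shannon entropy; conditional independence of the components means $P(B=b\mid Y=y)=\prod_i P(B_i=b_i\mid Y=y)$ for all $b$ and all $y$ with $P(Y=y)>0$. *)

(* Defs.v *)
From HB Require Import structures.
From mathcomp Require Import all_boot all_order all_algebra.
From mathcomp Require Import all_classical all_reals all_analysis.
Set Implicit Arguments. Unset Strict Implicit. Unset Printing Implicit Defensive.
Import Order.TTheory GRing.Theory Num.Theory.
Local Open Scope classical_set_scope.
Local Open Scope ring_scope.

Section Defs.
Context (d : measure_display) (T : measurableType d) (R : realType)
        (P : probability T R) (Ty : countType) (m : nat)
        (Y : T -> Ty) (B : 'I_m -> T -> bool).

Definition Pr (E : set T) : R := fine (P E).

Definition evY (y : Ty) : set T := [set t | Y t = y].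
Definition evB (b : {ffun 'I_m -> bool}) : set T := [set t | forall i, B i t = b i].
Definition evBi (i : 'I_m) (c : bool) : set T := [set t | B i t = c].

Definition hterm (y : Ty) (b : {ffun 'I_m -> bool}) : R :=
  let j := Pr (evY y `&` evB b) in
  if j == 0 then 0 else j * ln (Pr (evB b) / j).

Definition cond_entropy : \bar R :=
  (\sum_(b : {ffun 'I_m -> bool}) \esum_(y in [set: Ty]) (hterm y b)%:E)%E.

Definition condY (E : set T) (y : Ty) : R := Pr (E `&` evY y) / Pr (evY y).

Definition cond_indep : Prop :=
  forall y, 0 < Pr (evY y) ->
  forall b : {ffun 'I_m -> bool},
    condY (evB b) y = \prod_(i < m) condY (evBi i (b i)) y.

Definition phi (y : Ty) (i : 'I_m) : int :=
  let c := condY (evBi i true) y in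
  if c == 0 then (-1)%R else if c == 1 then 1%R else 0%R.

End Defs.

(* Main.v *)
Require Import Defs.
From HB Require Import structures.
From mathcomp Require Import all_boot all_order all_algebra.
From mathcomp Require Import all_classical all_reals all_analysis.
Import Order.TTheory GRing.Theory Num.Theory.
Local Open Scope classical_set_scope.
Local Open Scope ring_scope.

Section Helpers.
Context (d : measure_display) (T : measurableType d) (R : realType)
        (P : probability T R).

Lemma PrE (A : set T) : measurable A -> P A = (Pr P A)%:E.
Proof. by move=> mA; rewrite /Pr fineK // fin_num_measure. Qed.

Lemma Pr_ge0 (A : set T) : 0 <= Pr P A.
Proof. exact/fine_ge0/measure_ge0. Qed.

Lemma Pr_le (A C : set T) : measurable A -> measurable C -> A `<=` C ->
  Pr P A <= Pr P C.
Proof.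
move=> mA mC AC; rewrite -lee_fin -!PrE //.
by apply: le_measure => //; rewrite inE.
Qed.

Lemma PrU (A C : set T) : measurable A -> measurable C -> A `&` C = set0 ->
  Pr P (A `|` C) = Pr P A + Pr P C.
Proof.
move=> mA mC AC; apply: EFin_inj; rewrite EFinD -!PrE //; last exact: measurableU.
exact: measureU.
Qed.

End Helpers.
Arguments Pr_ge0 {d T R P A}.
Arguments PrE {d T R} P {A}.
Arguments Pr_le {d T R} P {A C}.
Arguments PrU {d T R} P {A C}.

Theorem lemma3 (d : measure_display) (T : measurableType d) (R : realType)
    (P : probability T R) (Ty : countType) (m : nat)
    (Y : T -> Ty) (B : 'I_m -> T -> bool)
    (mY : forall y : Ty, measurable (Y @^-1` [set y]))
    (mB : forall i : 'I_m, measurable (B i @^-1` [set true]))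
    (H0 : cond_entropy P Y B = 0%E)
    (Hind : cond_indep P Y B)
    (yn yl : Ty)
    (Pn : 0 < Pr P (evY Y yn)) (Pl : 0 < Pr P (evY Y yl))
    (Hne : yl != yn) :
  exists i : 'I_m, phi P Y B yn i = - phi P Y B yl i /\ phi P Y B yn i != 0.
Proof.
have mEY y : measurable (evY Y y) by exact: mY.
have EBF i : evBi B i false = ~` evBi B i true.
  by apply/seteqP; split => t /=; rewrite /evBi /=; case: (B i t).
have mEBi i c : measurable (evBi B i c).
  case: c; first exact: mB.
  by rewrite EBF; apply: measurableC; exact: mB.
have mEB b : measurable (evB B b).
  have -> : evB B b = \big[setI/setT]_(i <- enum 'I_m) evBi B i (b i).
    suff H s : [set t | forall i, i \in s -> B i t = b i] =
               \big[setI/setT]_(i <- s) evBi B i (b i).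
      rewrite -H; apply/seteqP; split => t /= Ht i //.
      by apply: Ht; rewrite mem_enum.
    elim: s => [|a s IH]; first by rewrite big_nil; apply/seteqP; split.
    rewrite big_cons -IH; apply/seteqP; split => t /=.
      move=> Ht; split; first by apply: Ht; rewrite inE eqxx.
      by move=> i iS; apply: Ht; rewrite inE iS orbT.
    by move=> [Ha Ht] i; rewrite inE => /orP[/eqP->//|/Ht].
  by apply: bigsetI_measurable => i _.
have hge0 y b : 0 <= hterm P Y B y b.
  rewrite /hterm; case: eqP => // j0.
  have jpos : 0 < Pr P (evY Y y `&` evB B b).
    by rewrite lt_def Pr_ge0 andbT; apply/eqP.
  have jle : Pr P (evY Y y `&` evB B b) <= Pr P (evB B b).
    by apply: (Pr_le P); [exact: measurableI|exact: mEB|exact: subIsetr].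
  apply: mulr_ge0; first exact: ltW.
  by apply: ln_ge0; rewrite ler_pdivlMr // mul1r.
have h0 y b : hterm P Y B y b = 0.
  apply/eqP; rewrite eq_le hge0 andbT.
  have Eb0 : (\esum_(y in [set: Ty]) (hterm P Y B y b)%:E = 0)%E.
    apply/eqP; rewrite eq_le esum_ge0 ?andbT; last by move=> z _; rewrite lee_fin.
    rewrite -H0 /cond_entropy (bigD1 b) //=.
    apply: leeDl; apply: sume_ge0 => c _.
    by apply: esum_ge0 => z _; rewrite lee_fin.
  suff: ((hterm P Y B y b)%:E <= 0)%E by rewrite lee_fin.
  rewrite -Eb0; apply: esum_ge.
  exists [set y]; first by split; [exact: finite_set1|by []].
  by rewrite fsbig_set1.
have hfull y b : 0 < Pr P (evY Y y `&` evB B b) ->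
    Pr P (evY Y y `&` evB B b) = Pr P (evB B b).
  move=> jpos; have := h0 y b; rewrite /hterm gt_eqF //.
  move/eqP; rewrite mulf_eq0 gt_eqF //= => /eqP hl.
  have jle : Pr P (evY Y y `&` evB B b) <= Pr P (evB B b).
    by apply: (Pr_le P); [exact: measurableI|exact: mEB|exact: subIsetr].
  have rpos : 0 < Pr P (evB B b) / Pr P (evY Y y `&` evB B b).
    by apply: divr_gt0 => //; apply: lt_le_trans jle.
  have r1 : Pr P (evB B b) / Pr P (evY Y y `&` evB B b) = 1.
    by rewrite -(lnK rpos) hl expR0.
  by rewrite -[RHS](divfK (lt0r_neq0 jpos)) r1 mul1r.
have cge0 E y : 0 <= condY P Y E y.
  by apply: divr_ge0; exact: Pr_ge0.
have ccompl i y : 0 < Pr P (evY Y y) ->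
    condY P Y (evBi B i false) y = 1 - condY P Y (evBi B i true) y.
  move=> Py; rewrite /condY.
  have hs : Pr P (evY Y y) = Pr P (evBi B i false `&` evY Y y) +
                             Pr P (evBi B i true `&` evY Y y).
    rewrite -PrU; [|exact: measurableI|exact: measurableI|].
      congr Pr; apply/seteqP; split => t /=.
        by rewrite /evBi /= => Yt; case: (B i t); [right|left].
      by case => -[].
    by apply/seteqP; split => t //= [[Hf _] [Ht _]]; move: Hf; rewrite /evBi /= Ht.
  have -> : Pr P (evBi B i false `&` evY Y y) =
     Pr P (evY Y y) - Pr P (evBi B i true `&` evY Y y) by rewrite hs addrK.
  by rewrite mulrBl divff // lt0r_neq0.
case: (pselect (exists i : 'I_m,
   phi P Y B yn i = - phi P Y B yl i /\ phi P Y B yn i != 0)) => // /forallNP Hno.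
exfalso.
pose cn i := condY P Y (evBi B i true) yn.
pose cl i := condY P Y (evBi B i true) yl.
pose b := [ffun i => if cn i == 0 then false else if cn i == 1 then true
                     else cl i != 0].
have hb i : 0 < condY P Y (evBi B i (b i)) yn /\ 0 < condY P Y (evBi B i (b i)) yl.
  have cE c y : 0 < Pr P (evY Y y) -> condY P Y (evBi B i c) y =
      if c then condY P Y (evBi B i true) y else 1 - condY P Y (evBi B i true) y.
    by case: c => // Py; rewrite ccompl.
  rewrite (cE (b i) yn) // (cE (b i) yl) //.
  have := Hno i; rewrite /phi -/(cn i) -/(cl i) ffunE.
  have cnc := ccompl i yn Pn; have clc := ccompl i yl Pl.
  rewrite -/(cn i) in cnc; rewrite -/(cl i) in clc.
  have cn0 : 0 <= cn i by exact: cge0.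
  have cl0 : 0 <= cl i by exact: cge0.
  have cn1 : cn i <= 1 by rewrite -subr_ge0 -cnc cge0.
  have cl1 : cl i <= 1 by rewrite -subr_ge0 -clc cge0.
  move: cn0 cl0 cn1 cl1; clear cnc clc; move: (cn i) (cl i) => x z x0 z0 x1 z1.
  have [->|n0] := eqVneq x 0.
    rewrite ?eqxx subr0 ltr01 => H; split => //.
    rewrite subr_gt0 lt_def z1 andbT.
    apply/negP => /eqP e; apply: H; rewrite -e ?eqxx ?oner_eq0; split => //; by rewrite oppr_eq0 oner_eq0.
  have [->|n1] := eqVneq x 1.
    rewrite ?oner_eq0 ?eqxx ltr01 => H; split => //.
    rewrite lt_def z0 andbT.
    by apply/negP => /eqP e; apply: H; rewrite -e ?eqxx ?opprK ?oner_eq0.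
  move=> _; rewrite ?(negPf n0) ?(negPf n1).
  have [->|c0] := eqVneq z 0.
    by rewrite ?eqxx /= subr0 ltr01 subr_gt0 lt_def eq_sym n1 x1.
  by rewrite /= !lt_def x0 z0 n0 c0.
have hB y : 0 < Pr P (evY Y y) -> 0 < condY P Y (evB B b) y ->
    Pr P (evY Y y `&` evB B b) = Pr P (evB B b).
  move=> Py hc; apply: hfull.
  have := mulr_gt0 hc Py; rewrite /condY divfK ?lt0r_neq0 // setIC //.
have hcn : 0 < condY P Y (evB B b) yn.
  by rewrite Hind //; apply: prodr_gt0 => i _; case: (hb i).
have hcl : 0 < condY P Y (evB B b) yl.
  by rewrite Hind //; apply: prodr_gt0 => i _; case: (hb i).
have en := hB yn Pn hcn; have el := hB yl Pl hcl.
have bpos : 0 < Pr P (evB B b).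
  rewrite -en; have := mulr_gt0 hcn Pn.
  by rewrite /condY divfK ?lt0r_neq0 // setIC.
have : Pr P ((evY Y yn `&` evB B b) `|` (evY Y yl `&` evB B b)) <= Pr P (evB B b).
  apply: (Pr_le P); [|exact: mEB|].
    by apply: measurableU; apply: measurableI.
  by move=> t [[_ ?]|[_ ?]].
rewrite PrU ?en ?el; [|exact: measurableI|exact: measurableI|].
  by rewrite -[X in _ <= X]add0r lerD2r leNgt bpos.
apply/seteqP; split => t //= [[/= Hn _] [/= Hl _]].
by move: Hne; rewrite /evY -Hn -Hl eqxx.
Qed.
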